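(* For all $V,W\in\mathcal G(s,d)$ and all $S\in\mathbb R^{d\times d}$ with $SV\in\mathcal G(s,d)$ (i.e. $\dim SV=s$), $$|\angle(SV,W)-\angle(V,W)|\le C\|S-I_d\|,\qquad C=\frac{\pi}{2}+\Big(\frac{\pi^2}{4}+1\Big)^{1/2}.$$
   Context: $\mathcal G(s,d)$ is the Grassmannian of $s$-dimensional subspaces of $\mathbb R^d$ and $\|\cdot\|$ is the spectral norm. For $V,W\in\mathcal G(s,d)$ choose $P,Q\in\mathbb R^{d\times s}$ with orthonormal columns spanning $V$ and $W$; the principal angles $0\le\phi_1\le\dots\le\phi_s\le\pi/2$ are defined by $\cos\phi_j=\sigma_j$ where $\sigma_1\ge\dots\ge\sigma_s\ge0$ are the singular values of $P^\top Q$, and $\angle(V,W):=\phi_s$ is the maximal principal angle. *)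

(* Defs.v *)
From HB Require Import structures.
From mathcomp Require Import all_boot all_order all_algebra.
From mathcomp Require Import classical_sets boolp reals trigo.
Set Implicit Arguments. Unset Strict Implicit. Unset Printing Implicit Defensive.
Import Order.TTheory GRing.Theory Num.Theory.
Local Open Scope ring_scope.

Section Defs.
Variable R : realType.

(* Subspaces of R^d are represented as row spaces of d x d matrices
   (mxalgebra convention).  V is in G(s,d) iff \rank V = s. *)
Definition in_Grass (s d : nat) (V : 'M[R]_d) : Prop := \rank V = s.

(* Image S V = { S x | x in V } of the subspace V under S : R^{d x d}
   (acting on column vectors); in row convention its row space is V S^T. *)
Definition img_sub (d : nat) (S V : 'M[R]_d) : 'M[R]_d := V *m S^T.

Definition onb (s d : nat) (V : 'M[R]_d) (P : 'M[R]_(d, s)) : Prop :=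
  P^T *m P = 1%:M /\ (P^T == V)%MS.

Definition sing_vals (s : nat) (M : 'M[R]_s) (sig : 'rV[R]_s) : Prop :=
  (forall i j : 'I_s, (i <= j)%N -> sig 0 j <= sig 0 i) /\
  (forall i, 0 <= sig 0 i) /\
  exists U W : 'M[R]_s,
    [/\ U^T *m U = 1%:M, W^T *m W = 1%:M & M = U *m diag_mx sig *m W^T].

Definition sing_min (s : nat) (M : 'M[R]_s) : R :=
  let sig := xget 0 [set sig | sing_vals M sig] in
  \big[Num.min/1]_(i < s) sig 0 i.

Definition max_angle (s d : nat) (V W : 'M[R]_d) : R :=
  let P := xget 0 [set P : 'M[R]_(d, s) | onb V P] in
  let Q := xget 0 [set Q : 'M[R]_(d, s) | onb W Q] in
  acos (sing_min (P^T *m Q)).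

Definition vnorm (d : nat) (x : 'cV[R]_d) : R :=
  Num.sqrt (\sum_i x i 0 ^+ 2).

Definition spec_norm (d : nat) (A : 'M[R]_d) : R :=
  sup [set vnorm (A *m x) | x in [set x : 'cV[R]_d | vnorm x = 1]].

End Defs.

(* Main.v *)
Require Import Defs.
From HB Require Import structures.
From mathcomp Require Import all_boot all_order all_algebra perm.
From mathcomp Require Import classical_sets boolp reals trigo.
From mathcomp Require Import derive realfun topology normedtype.
From mathcomp Require Import complex.
From mathcomp Require Import ring lra zify.
Import Order.TTheory GRing.Theory Num.Theory.
Import numFieldNormedType.Exports.
Local Open Scope ring_scope.
Set Implicit Arguments. Unset Strict Implicit. Unset Printing Implicit Defensive.

Section Vec.
Variable R : realType.
Implicit Types (n : nat).

Definition dot n (u v : 'cV[R]_n) : R := (u^T *m v) 0 0.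

Lemma dotE n (u v : 'cV[R]_n) : dot u v = \sum_i u i 0 * v i 0.
Proof. by rewrite /dot mxE; apply: eq_bigr => i _; rewrite mxE. Qed.

Lemma dotC n (u v : 'cV[R]_n) : dot u v = dot v u.
Proof. by rewrite !dotE; apply: eq_bigr => i _; rewrite mulrC. Qed.

Lemma dotDl n (u v w : 'cV[R]_n) : dot (u + v) w = dot u w + dot v w.
Proof. by rewrite /dot linearD /= mulmxDl mxE. Qed.

Lemma dotDr n (u v w : 'cV[R]_n) : dot w (u + v) = dot w u + dot w v.
Proof. by rewrite /dot mulmxDr mxE. Qed.

Lemma dotZl n a (u v : 'cV[R]_n) : dot (a *: u) v = a * dot u v.
Proof. by rewrite /dot linearZ /= -scalemxAl mxE. Qed.

Lemma dotZr n a (u v : 'cV[R]_n) : dot v (a *: u) = a * dot v u.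
Proof. by rewrite /dot -scalemxAr mxE. Qed.

Lemma dotNl n (u v : 'cV[R]_n) : dot (- u) v = - dot u v.
Proof. by rewrite -scaleN1r dotZl mulN1r. Qed.

Lemma dotNr n (u v : 'cV[R]_n) : dot v (- u) = - dot v u.
Proof. by rewrite -scaleN1r dotZr mulN1r. Qed.

Lemma dotBl n (u v w : 'cV[R]_n) : dot (u - v) w = dot u w - dot v w.
Proof. by rewrite dotDl dotNl. Qed.

Lemma dotBr n (u v w : 'cV[R]_n) : dot w (u - v) = dot w u - dot w v.
Proof. by rewrite dotDr dotNr. Qed.

Lemma dot0l n (v : 'cV[R]_n) : dot 0 v = 0.
Proof. by rewrite /dot trmx0 mul0mx mxE. Qed.

Lemma dot0r n (v : 'cV[R]_n) : dot v 0 = 0.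
Proof. by rewrite /dot mulmx0 mxE. Qed.

Lemma dotMl n m (A : 'M[R]_(m, n)) u v : dot (A *m u) v = dot u (A^T *m v).
Proof. by rewrite /dot trmx_mul mulmxA. Qed.

Lemma dot_ge0 n (u : 'cV[R]_n) : 0 <= dot u u.
Proof. by rewrite dotE sumr_ge0 // => i _; rewrite -expr2 sqr_ge0. Qed.

Lemma dot_eq0 n (u : 'cV[R]_n) : (dot u u == 0) = (u == 0).
Proof.
apply/idP/idP => [|/eqP->]; last by rewrite dot0l.
rewrite dotE psumr_eq0 => [/allP H|i _]; last by rewrite -expr2 sqr_ge0.
apply/eqP/matrixP => i j; rewrite ord1 mxE.
by have /(_ (mem_index_enum i)) := H i; rewrite -expr2 sqrf_eq0 => /eqP.
Qed.

Lemma vnormE n (x : 'cV[R]_n) : vnorm x = Num.sqrt (dot x x).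
Proof. by rewrite /vnorm dotE; congr Num.sqrt; apply: eq_bigr => i _; rewrite expr2. Qed.

Lemma vnorm_ge0 n (x : 'cV[R]_n) : 0 <= vnorm x.
Proof. by rewrite vnormE sqrtr_ge0. Qed.

Lemma vnorm_sq n (x : 'cV[R]_n) : vnorm x ^+ 2 = dot x x.
Proof. by rewrite vnormE sqr_sqrtr // dot_ge0. Qed.

Lemma vnorm_eq0 n (x : 'cV[R]_n) : (vnorm x == 0) = (x == 0).
Proof. by rewrite vnormE sqrtr_eq0 -dot_eq0 eq_le dot_ge0 andbT. Qed.

Lemma vnormZ n a (x : 'cV[R]_n) : vnorm (a *: x) = `|a| * vnorm x.
Proof.
by rewrite !vnormE dotZl dotZr mulrA -expr2 sqrtrM ?sqr_ge0 // sqrtr_sqr.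
Qed.

Lemma CS2 n (u v : 'cV[R]_n) : dot u v ^+ 2 <= dot u u * dot v v.
Proof.
have [u0|uN0] := eqVneq u 0.
  by rewrite u0 !dot0l expr0n /= mul0r.
have uu0 : 0 < dot u u by rewrite lt_def dot_eq0 uN0 dot_ge0.
set t := dot u v / dot u u.
have := dot_ge0 (v - t *: u).
rewrite !(dotBl, dotBr, dotZl, dotZr) (dotC v u).
rewrite /t.
set a := dot u u; set b := dot u v; set c := dot v v => H.
have := mulr_ge0 (ltW uu0) H.
have -> : a * (c - b / a * b - b / a * (b - b / a * a)) = a * c - b ^+ 2.
  by field; rewrite gt_eqF.
by rewrite subr_ge0 mulrC.
Qed.

Lemma CS n (u v : 'cV[R]_n) : `|dot u v| <= vnorm u * vnorm v.
Proof.
rewrite !vnormE -sqrtrM ?dot_ge0 // -sqrtr_sqr ler_sqrt ?CS2 //.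
by rewrite mulr_ge0 ?dot_ge0.
Qed.

Lemma CS' n (u v : 'cV[R]_n) : dot u v <= vnorm u * vnorm v.
Proof. exact: le_trans (ler_norm _) (CS u v). Qed.

Lemma orth_dot n m (P : 'M[R]_(n, m)) y z : P^T *m P = 1%:M ->
  dot (P *m y) (P *m z) = dot y z.
Proof. by move=> HP; rewrite dotMl mulmxA HP mul1mx. Qed.

Lemma orth_vnorm n m (P : 'M[R]_(n, m)) y : P^T *m P = 1%:M ->
  vnorm (P *m y) = vnorm y.
Proof. by move=> HP; rewrite !vnormE orth_dot. Qed.

End Vec.

Section Onb.
Variable R : realType.

Lemma mx11_eq (A B : 'M[R]_1) : A 0 0 = B 0 0 -> A = B.
Proof. by move=> H; apply/matrixP => i j; rewrite !ord1. Qed.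

Lemma unit_trmx d (v : 'cV[R]_d) : dot v v = 1 -> v^T *m v = 1%:M.
Proof. by move=> H; apply: mx11_eq; rewrite -/(dot v v) H mxE. Qed.

Lemma normalize d (r : 'cV[R]_d) : r != 0 ->
  dot ((vnorm r)^-1 *: r) ((vnorm r)^-1 *: r) = 1.
Proof.
move=> rN0; have nr : vnorm r != 0 by rewrite vnorm_eq0.
by rewrite dotZl dotZr -vnorm_sq; field.
Qed.

Lemma onb_exists d k (U : 'M[R]_d) : \rank U = k ->
  exists P : 'M[R]_(d, k), P^T *m P = 1%:M /\ (P^T == U)%MS.
Proof.
elim: k U => [|k IH] U rU.
  exists 0; split; first by rewrite !flatmx0.
  have /eqP -> : U == 0 by rewrite -mxrank_eq0 rU.
  by rewrite trmx0; apply/andP; split; rewrite sub0mx.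
have UN0 : U != 0 by rewrite -mxrank_eq0 rU.
have [i ri] : exists i, row i U != 0.
  apply/existsP; move: UN0; apply: contraR; rewrite negb_exists => /forallP H.
  by apply/eqP/row_matrixP => i; rewrite row0; apply/eqP; move/negPn: (H i).
set r := (row i U)^T.
have rN0 : r != 0 by rewrite trmx_eq0.
pose v : 'cV[R]_d := (vnorm r)^-1 *: r.
have vv : dot v v = 1 by apply: normalize.
have vU : (v^T <= U)%MS by rewrite /v linearZ /= trmxK scalemx_sub // row_sub.
set K := kermx v.
have vK : ~~ (v^T <= K)%MS.
  by rewrite sub_kermx unit_trmx // -(mxrank_eq0 (1%:M : 'M[R]_1)) mxrank1.
have rv : \rank v = 1%N.
  apply/eqP; rewrite eqn_leq rank_leq_col lt0n mxrank_eq0.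
  by apply: contraNneq vK => ->; rewrite trmx0 sub0mx.
have rK : \rank K = (d - 1)%N by rewrite mxrank_ker rv.
have rUK : \rank (U + K)%MS = d.
  apply/eqP; rewrite eqn_leq rank_leq_col /=.
  have := mxrank_leqif_sup (addsmxSr U K); case=> Hle Heq.
  rewrite leqNgt; apply/negP => Hlt.
  have : \rank K == \rank (U + K)%MS.
    by rewrite eqn_leq Hle rK; lia.
  rewrite Heq => HUK.
  by move/negP: vK; apply; apply: submx_trans vU (submx_trans (addsmxSl U K) HUK).
have rUp : \rank (U :&: K)%MS = k.
  have := mxrank_sum_cap U K; rewrite rUK rU rK.
  have d1 : (0 < d)%N by move: (rank_leq_row v); rewrite rv.
  lia.
have [P' [P'o P'U]] := IH _ rUp.
have P'v : P'^T *m v = 0.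
  apply/eqP; rewrite -sub_kermx; apply: submx_trans (capmxSr U K).
  by case/andP: P'U.
exists (row_mx v P' : 'M[R]_(d, 1 + k)); split.
  rewrite (tr_row_mx v P') (mul_col_row v^T P'^T v P') P'o P'v unit_trmx //.
  have -> : v^T *m P' = 0 by rewrite -[v^T *m P']trmxK trmx_mul trmxK P'v trmx0.
  by rewrite -scalar_mx_block.
rewrite (tr_row_mx v P').
have sub : (col_mx v^T P'^T <= U)%MS.
  rewrite col_mx_sub vU /=; apply: submx_trans (capmxSl U K).
  by case/andP: P'U.
have rP : \rank (col_mx v^T P'^T) = k.+1.
  apply/eqP; rewrite eqn_leq rank_leq_row /=.
  rewrite -{1}(mxrank1 R k.+1).
  have -> : (1%:M : 'M[R]_k.+1) = col_mx v^T P'^T *m row_mx v P'.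
    rewrite (mul_col_row v^T P'^T v P') P'o P'v unit_trmx //.
    have -> : v^T *m P' = 0 by rewrite -[v^T *m P']trmxK trmx_mul trmxK P'v trmx0.
    by rewrite -scalar_mx_block.
  exact: mxrankM_maxl.
apply/andP; split => //.
by rewrite -(mxrank_leqif_sup sub).2 rP rU.
Qed.

End Onb.

Section Eig.
Variable R : realType.

Lemma sym_eigvec n (A : 'M[R]_n.+1) : A^T = A ->
  exists2 w : 'cV[R]_n.+1, w != 0 & exists l, A *m w = l *: w.
Proof.
move=> Asym.
pose A' := map_mx (fun c : R => (c%:C)%C) A.
have [mu] : exists mu, eigenvalue A' mu.
  have /closed_rootP [mu Hmu] : size (char_poly A') != 1%N by rewrite size_char_poly.
  by exists mu; rewrite eigenvalue_root_char.
move=> /eigenvalueP [z zA zN0].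
have [x [y zE]] : exists x y : 'rV[R]_n.+1, forall j, z 0 j = (x 0 j +i* y 0 j)%C.
  exists (\row_j complex.Re (z 0 j)), (\row_j complex.Im (z 0 j)) => j.
  by rewrite !mxE; case: (z 0 j).
have [a [b muE]] : exists a b : R, mu = (a +i* b)%C by clear; case: mu => a b; exists a, b.
have HxA : x *m A = a *: x - b *: y.
  apply/rowP => j; have /rowP /(_ j) := zA.
  rewrite !mxE => /(congr1 (@complex.Re R)).
  rewrite (raddf_sum (@complex.Re R)) => H.
  transitivity (\sum_i complex.Re (z 0 i * A' i j)).
    by apply: eq_bigr => i _; rewrite !mxE zE /=; ring.
  by rewrite H muE zE /=; ring.
have HyA : y *m A = b *: x + a *: y.
  apply/rowP => j; have /rowP /(_ j) := zA.
  rewrite !mxE => /(congr1 (@complex.Im R)).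
  rewrite (raddf_sum (@complex.Im R)) => H.
  transitivity (\sum_i complex.Im (z 0 i * A' i j)).
    by apply: eq_bigr => i _; rewrite !mxE zE /=; ring.
  by rewrite H muE zE /=; ring.
pose dt (u v : 'rV[R]_n.+1) := (u *m v^T) 0 0.
have dtC u v : dt u v = dt v u.
  by rewrite /dt !mxE; apply: eq_bigr => i _; rewrite !mxE mulrC.
have dtA u v : dt (u *m A) v = dt u (v *m A).
  by rewrite /dt trmx_mul Asym mulmxA.
have dtDl u v w : dt (u + v) w = dt u w + dt v w by rewrite /dt mulmxDl mxE.
have dtZl c u w : dt (c *: u) w = c * dt u w by rewrite /dt -scalemxAl mxE.
have dtNl u w : dt (- u) w = - dt u w by rewrite /dt mulNmx mxE.
have dt_ge0 u : 0 <= dt u u.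
  by rewrite /dt mxE sumr_ge0 // => i _; rewrite mxE -expr2 sqr_ge0.
have dt_eq0 u : dt u u = 0 -> u = 0.
  rewrite /dt mxE => /eqP; rewrite psumr_eq0 => [/allP H|i _]; last first.
    by rewrite mxE -expr2 sqr_ge0.
  apply/rowP => i; rewrite mxE.
  by have /(_ (mem_index_enum i)) := H i; rewrite mxE -expr2 sqrf_eq0 => /eqP.
have key : b * (dt x x + dt y y) = 0.
  have := dtA x y; rewrite HxA HyA.

  rewrite !(dtDl, dtZl, dtNl) => H.
  rewrite (dtC x (b *: x + a *: y)) dtDl !dtZl (dtC y x) in H; lra.
have xyN0 : (x != 0) || (y != 0).
  apply: contraNT zN0; rewrite negb_or !negbK => /andP [/eqP x0 /eqP y0].
  apply/eqP/rowP => j; rewrite zE x0 y0 !mxE; done.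
have b0 : b = 0.
  move/eqP: key; rewrite mulf_eq0 => /orP [/eqP //|/eqP H].
  have hx := dt_ge0 x; have hy := dt_ge0 y.
  have Hx : dt x x = 0 by lra.
  have Hy : dt y y = 0 by lra.
  by move: xyN0; rewrite (dt_eq0 _ Hx) (dt_eq0 _ Hy) eqxx.
have eig u : u *m A = a *: u -> A *m u^T = a *: u^T.
  by move=> H; rewrite -{1}Asym -trmx_mul H linearZ.
case/orP: xyN0 => [xN0|yN0].
  exists x^T; first by rewrite trmx_eq0.
  by exists a; apply: eig; rewrite HxA b0 scale0r subr0.
exists y^T; first by rewrite trmx_eq0.
by exists a; apply: eig; rewrite HyA b0 scale0r add0r.
Qed.

End Eig.

Section Svd.
Variable R : realType.

Lemma compl d (w : 'cV[R]_d.+1) : dot w w = 1 ->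
  exists P : 'M[R]_(d.+1, d), P^T *m P = 1%:M /\ P^T *m w = 0.
Proof.
move=> ww.
have wN0 : w != 0 by rewrite -dot_eq0 ww oner_eq0.
have rw : \rank w = 1%N.
  by apply/eqP; rewrite eqn_leq rank_leq_col lt0n mxrank_eq0.
have rK : \rank (kermx w) = d by rewrite mxrank_ker rw subn1.
have [P [Po PK]] := onb_exists rK.
exists P; split => //; apply/eqP; rewrite -sub_kermx; by case/andP: PK.
Qed.

Lemma orth_row d (w : 'cV[R]_(1 + d)) (P : 'M[R]_(1 + d, d)) :
  dot w w = 1 -> P^T *m P = 1%:M -> P^T *m w = 0 ->
  (row_mx w P)^T *m row_mx w P = 1%:M.
Proof.
move=> ww Po Pw.
rewrite (tr_row_mx w P) (mul_col_row w^T P^T w P) Po Pw unit_trmx //.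
have -> : w^T *m P = 0 by rewrite -[w^T *m P]trmxK trmx_mul trmxK Pw trmx0.
by rewrite -scalar_mx_block.
Qed.

Lemma orthC n (O : 'M[R]_n) : O^T *m O = 1%:M -> O *m O^T = 1%:M.
Proof. exact: mulmx1C. Qed.

Lemma block_orth n (U : 'M[R]_n) : U^T *m U = 1%:M ->
  (block_mx 1%:M 0 0 U : 'M[R]_(1 + n))^T *m block_mx 1%:M 0 0 U = 1%:M.
Proof.
move=> Uo; rewrite tr_block_mx mulmx_block !trmx0 trmx1 !mulmx0 !mul0mx mulmx1 Uo.
by rewrite !addr0 add0r -scalar_mx_block.
Qed.

Lemma svd_exists n (M : 'M[R]_n) : exists (U W : 'M[R]_n) (sig : 'rV[R]_n),
  [/\ U^T *m U = 1%:M, W^T *m W = 1%:M, (forall i, 0 <= sig 0 i) &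
      M = U *m diag_mx sig *m W^T].
Proof.
elim: n M => [|n IH] M.
  exists 1%:M, 1%:M, 0; split => //; last by rewrite [M]flatmx0 [RHS]flatmx0.
  - by rewrite [LHS]flatmx0 [RHS]flatmx0.
  - by rewrite [LHS]flatmx0 [RHS]flatmx0.
  - by move=> [].
have Asym : (M^T *m M)^T = M^T *m M by rewrite trmx_mul trmxK.
have [w0 w0N0 [l Hl]] := sym_eigvec Asym.
pose w := (vnorm w0)^-1 *: w0.
have ww : dot w w = 1 by apply: normalize.
have Aw : M^T *m M *m w = l *: w by rewrite /w -!scalemxAr Hl scalerA mulrC -scalerA.
have [u [s0 [uu s0p Mw MTu]]] : exists (u : 'cV[R]_n.+1) (s0 : R),
    [/\ dot u u = 1, 0 <= s0, M *m w = s0 *: u & M^T *m u = s0 *: w].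
  have [Mw0|MwN0] := eqVneq (M *m w) 0.
    have wN0 : w != 0 by rewrite -dot_eq0 ww oner_eq0.
    have rM : (\rank M < n.+1)%N.
      have : (w^T <= kermx M^T)%MS by rewrite sub_kermx -trmx_mul Mw0 trmx0.
      move=> /mxrankS; rewrite mxrank_ker !mxrank_tr.
      have : \rank w = 1%N.
        by apply/eqP; rewrite eqn_leq rank_leq_col lt0n mxrank_eq0.
      move=> ->; have := rank_leq_row M; lia.
    have : kermx M != 0.
      by rewrite -mxrank_eq0 mxrank_ker; lia.
    move=> KN0.
    have [i ri] : exists i, row i (kermx M) != 0.
      apply/existsP; move: KN0; apply: contraR; rewrite negb_exists => /forallP H.
      by apply/eqP/row_matrixP => i; rewrite row0; apply/eqP; move/negPn: (H i).
    pose r := (row i (kermx M))^T.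
    have rN0 : r != 0 by rewrite trmx_eq0.
    exists ((vnorm r)^-1 *: r), 0; split => //; first exact: normalize.
      by rewrite Mw0 scale0r.
    rewrite scale0r -scalemxAr /r.
    have : (row i (kermx M) <= kermx M)%MS := row_sub _ _.
    rewrite sub_kermx => /eqP H.
    by rewrite -[M^T *m (row i (kermx M))^T]trmxK trmx_mul !trmxK H trmx0 scaler0.
  pose s := vnorm (M *m w).
  have sN0 : s != 0 by rewrite vnorm_eq0.
  have s2 : s ^+ 2 = l.
    rewrite /s vnorm_sq dotMl mulmxA Aw dotZr ww mulr1 //.
  exists (s^-1 *: (M *m w)), s; split.
  - exact: normalize.
  - exact: vnorm_ge0.
  - by rewrite scalerA divff // scale1r.
  - rewrite -scalemxAr mulmxA Aw scalerA -s2; congr (_ *: _).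
    by rewrite expr2 mulrA mulVf // mul1r.
have [Pw [Pwo Pww]] := compl ww.
have [Pu [Puo Puu]] := compl uu.
pose Ow : 'M[R]_(1 + n) := row_mx w Pw.
pose Ou : 'M[R]_(1 + n) := row_mx u Pu.
have Owo : Ow^T *m Ow = 1%:M by apply: orth_row.
have Ouo : Ou^T *m Ou = 1%:M by apply: orth_row.
pose M' := Pu^T *m M *m Pw.
have [U' [W' [sig' [U'o W'o sig'0 M'E]]]] := IH M'.
have B : Ou^T *m M *m Ow = block_mx s0%:M 0 0 M'.
  rewrite /Ou /Ow (tr_row_mx u Pu) (mul_col_mx u^T Pu^T M).
  rewrite (mul_col_row (u^T *m M) (Pu^T *m M) w Pw).
  rewrite -(mulmxA u^T M w) Mw -(mulmxA Pu^T M w) Mw -!scalemxAr unit_trmx // Puu scaler0.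
  have -> : u^T *m M = s0 *: w^T by rewrite -[u^T *m M]trmxK trmx_mul trmxK MTu linearZ.
  rewrite -scalemxAl.
  have -> : w^T *m Pw = 0 by rewrite -[w^T *m Pw]trmxK trmx_mul trmxK Pww trmx0.
  by rewrite scaler0 scalemx1.
exists (Ou *m block_mx 1%:M 0 0 U'), (Ow *m block_mx 1%:M 0 0 W'),
  (row_mx (s0%:M : 'rV[R]_1) sig'); split.
- by rewrite trmx_mul mulmxA -(mulmxA _ Ou^T) Ouo mulmx1 block_orth.
- by rewrite trmx_mul mulmxA -(mulmxA _ Ow^T) Owo mulmx1 block_orth.
- move=> i; rewrite mxE; case: splitP => k _; last exact: sig'0. all: first [done | idtac].
  by rewrite ord1 mxE.
- have -> : M = Ou *m (Ou^T *m M *m Ow) *m Ow^T.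
    by rewrite !mulmxA orthC // mul1mx -mulmxA orthC // mulmx1.
  rewrite B (diag_mx_row (s0%:M : 'rV[R]_1) sig') trmx_mul (tr_block_mx 1%:M 0 0 W').
  rewrite -!mulmxA; congr (_ *m _); rewrite !mulmxA; congr (_ *m _).
  rewrite (mulmx_block 1%:M 0 0 U' (diag_mx (s0%:M : 'rV[R]_1)) 0 0 (diag_mx sig')).
  rewrite !mulmx0 !mul0mx !addr0 !add0r mul1mx.
  rewrite !trmx0 trmx1.
  rewrite (mulmx_block (diag_mx (s0%:M : 'rV[R]_1)) 0 0 (U' *m diag_mx sig') 1%:M 0 0 W'^T).
  rewrite !mulmx0 !mul0mx !addr0 !add0r mulmx1 -M'E.
  by congr block_mx; apply/matrixP => i j; rewrite !ord1 !mxE.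
Qed.

End Svd.

Section Sort.
Variable R : realType.

Lemma sort_perm n (sig : 'rV[R]_n) : exists p : 'S_n,
  forall i j : 'I_n, (i <= j)%N -> sig 0 (p j) <= sig 0 (p i).
Proof.
pose t := [tuple sig 0 i | i < n].
pose s := sort (fun x y : R => y <= x) t.
have : perm_eq s t by rewrite perm_sort.
case/tuple_permP => p sE.
exists p => i j ij.
have srt : sorted (fun x y : R => y <= x) s.
  by apply: sort_sorted => x y; exact: le_total.
have szs : size s = n by rewrite sE size_tuple.
have nthE (k : 'I_n) : nth 0 s k = sig 0 (p k).
  by rewrite sE (nth_map k) ?size_enum_ord // nth_ord_enum tnth_mktuple.
rewrite -!nthE.
have tr : transitive (fun x y : R => y <= x).
  by move=> x y z /= H1 H2; apply: le_trans H2 H1.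
have rf : reflexive (fun x y : R => y <= x) by move=> x /=.
apply: (sorted_leq_nth tr rf 0 srt) => //; by rewrite inE szs.
Qed.

Lemma sing_vals_exists n (M : 'M[R]_n) : exists sig, sing_vals M sig.
Proof.
have [U [W [sig [Uo Wo sig0 ME]]]] := svd_exists M.
have [p Hp] := sort_perm sig.
pose P : 'M[R]_n := perm_mx p.
have PPt : P *m P^T = 1%:M by rewrite /P tr_perm_mx -perm_mxM mulgV perm_mx1.
have PtP : P^T *m P = 1%:M by apply: mulmx1C.
pose sig2 := \row_i sig 0 (p i).
have D2 : P *m diag_mx sig *m P^T = diag_mx sig2.
  rewrite /P -row_permE tr_perm_mx -col_permE.
  apply/matrixP => i j; rewrite !mxE (inj_eq perm_inj).
  by case: eqP => [->|]; rewrite ?mulr1n ?mulr0n.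
exists sig2; split.
  by move=> i j ij; rewrite !mxE; apply: Hp.
split; first by move=> i; rewrite mxE.
exists (U *m P^T), (W *m P^T); split.
- by rewrite trmx_mul trmxK mulmxA -(mulmxA P) Uo mulmx1 PPt.
- by rewrite trmx_mul trmxK mulmxA -(mulmxA P) Wo mulmx1 PPt.
- rewrite -D2 ME trmx_mul trmxK -!mulmxA (mulmxA P^T P) PtP mul1mx.
  by rewrite (mulmxA P^T P) PtP mul1mx !mulmxA.
Qed.

End Sort.

Section SMin.
Variable R : realType.

Lemma bigmin_le1 n (f : 'I_n -> R) : \big[Num.min/1]_(i < n) f i <= 1.
Proof. by elim/big_rec: _ => // i x _ H; rewrite ge_min H orbT. Qed.

Lemma bigmin_ge0 n (f : 'I_n -> R) : (forall i, 0 <= f i) ->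
  0 <= \big[Num.min/1]_(i < n) f i.
Proof. by move=> H; elim/big_rec: _ => // i x _ Hx; rewrite le_min H Hx. Qed.

Lemma bigmin_le n (f : 'I_n -> R) i : \big[Num.min/1]_(i < n) f i <= f i.
Proof. by rewrite (bigD1 i) //= ge_min lexx. Qed.

Lemma bigmin_ex n (f : 'I_n -> R) : (0 < n)%N ->
  exists i, Num.min 1 (f i) <= \big[Num.min/1]_(i < n) f i.
Proof.
move=> n0.
elim/big_rec: _ => [|j x _ [i Hi]].
  by exists (Ordinal n0); rewrite ge_min lexx.
case: (leP (f j) x) => H.
  by exists j; rewrite ge_min lexx orbT.
by exists i.
Qed.

Lemma orthT n (W : 'M[R]_n) : W^T *m W = 1%:M -> W^T^T *m W^T = 1%:M.
Proof. by move=> Wo; rewrite trmxK mulmx1C. Qed.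

Lemma sing_min_props s (M : 'M[R]_s) : (0 < s)%N ->
  (forall y, vnorm (M *m y) <= vnorm y) ->
  [/\ 0 <= sing_min M, sing_min M <= 1,
      (forall y, sing_min M * vnorm y <= vnorm (M *m y)) &
      exists y, vnorm y = 1 /\ vnorm (M *m y) <= sing_min M].
Proof.
move=> s0 Mc.
rewrite /sing_min /=.
set sig := xget _ _.
have : sing_vals M sig by apply: xgetPex; apply: sing_vals_exists.
case=> _ [sig0 [U [W [Uo Wo ME]]]].
set c := \big[Num.min/1]_(i < s) sig 0 i.
have c0 : 0 <= c by apply: bigmin_ge0.
have MyE y : vnorm (M *m y) = vnorm (diag_mx sig *m (W^T *m y)).
  by rewrite ME -!mulmxA orth_vnorm.
have DzE z : dot (diag_mx sig *m z) (diag_mx sig *m z) = \sum_i (sig 0 i * z i 0) ^+ 2.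
  by rewrite dotE; apply: eq_bigr => i _; rewrite mul_diag_mx mxE expr2.
split => //.
- exact: bigmin_le1.
- move=> y; rewrite MyE -(orth_vnorm y (orthT Wo)).
  set z := W^T *m y.
  have cE : c = Num.sqrt (c ^+ 2) by rewrite sqrtr_sqr ger0_norm.
  rewrite !vnormE {1}cE -sqrtrM ?sqr_ge0 // ler_sqrt; last by rewrite dot_ge0.
  rewrite DzE dotE mulr_sumr; apply: ler_sum => i _.
  rewrite exprMn -expr2; apply: ler_wpM2r; first exact: sqr_ge0.
  have ci : c <= sig 0 i := bigmin_le _ i.
  by rewrite ler_pXn2r // nnegrE.
- have [i Hi] := bigmin_ex (fun i => sig 0 i) s0.
  have e1 : vnorm (delta_mx i 0 : 'cV[R]_s) = 1.
    by rewrite vnormE /dot trmx_delta mul_delta_mx mxE !eqxx sqrtr1.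
  have We : vnorm (W *m delta_mx i 0) = 1 by rewrite orth_vnorm.
  exists (W *m delta_mx i 0); split => //.
  apply: le_trans Hi; rewrite le_min -{1}We Mc /=.
  rewrite MyE (mulmxA W^T W) Wo mul1mx.
  have -> : diag_mx sig *m delta_mx i 0 = sig 0 i *: (delta_mx i 0 : 'cV[R]_s).
    apply/matrixP => j k; rewrite mul_diag_mx !mxE.
    by case: eqP => [->|]; rewrite ?mulr1 ?mulr0.
  by rewrite vnormZ e1 mulr1 ger0_norm.
Qed.

End SMin.

Section Spec.
Variable R : realType.

Lemma coord_le1 d (x : 'cV[R]_d) j : vnorm x = 1 -> `|x j 0| <= 1.
Proof.
move=> x1.
have : x j 0 ^+ 2 <= 1.
  have := vnorm_sq x; rewrite x1 expr1n dotE => ->.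
  rewrite (bigD1 j) //= -expr2 lerDl sumr_ge0 // => i _; by rewrite -expr2 sqr_ge0.
move=> H; rewrite -(ger0_norm ler01) -ler_sqr ?nnegrE ?sqr_norm ?normr1 ?expr1n // real_normK ?num_real //.
Qed.

Lemma spec_norm_ub d (A : 'M[R]_d) x : vnorm x = 1 -> vnorm (A *m x) <= spec_norm A.
Proof.
move=> x1.
apply: ub_le_sup; last by exists x.
exists (Num.sqrt (\sum_i (\sum_j `|A i j|) ^+ 2)).
move=> _ [y /= y1 <-].
rewrite /vnorm ler_sqrt; last by rewrite sumr_ge0 // => i _; rewrite sqr_ge0.
apply: ler_sum => i _.
rewrite -[X in X <= _]real_normK ?num_real // ler_pXn2r ?nnegrE ?sumr_ge0 //.
rewrite mxE; apply: le_trans (ler_norm_sum _ _ _) _.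
apply: ler_sum => j _; rewrite normrM -{2}[`|A i j|]mulr1 ler_wpM2l //.
exact: coord_le1.
Qed.

End Spec.

Section Trig.
Variable R : realType.

Lemma sin_ge_tcos (t : R) : 0 <= t <= pi -> t * cos t <= sin t.
Proof.
case/andP => t0 tpi.
have [->|tpos] := eqVneq t 0; first by rewrite mul0r sin0.
have t0' : 0 < t by rewrite lt_def tpos t0.
have [c /andP [c0 ct] H] : exists2 c, 0 < c < t & sin t - sin 0 = cos c * (t - 0).
  have := @MVT R sin cos 0 t t0'.
  move=> /(_ (fun x _ => is_derive_sin x)).
  have cs : {within `[0, t], continuous (@sin R)}%classic.
    exact/continuous_subspaceT/continuous_sin.
  move=> /(_ cs).
  by case=> c; rewrite in_itv /= => Hc E; exists c.
move: H; rewrite sin0 !subr0 => ->.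
rewrite mulrC ler_wpM2r // ltW //.
rewrite ltr_cos ?in_itv /= ?(ltW c0) ?(ltW (lt_le_trans ct tpi)) ?t0 ?tpi //.
Qed.

Lemma sincos_piquarter : sin (pi / 4 : R) = cos (pi / 4) /\ cos (pi / 4 : R) ^+ 2 = 1 / 2.
Proof.
have c0 : cos (pi / 4 : R) != 0.
  apply/negP => /eqP H; have := tan_piquarter R; rewrite /tan H invr0 mulr0.
  by move/eqP; rewrite eq_sym oner_eq0.
have sc : sin (pi / 4 : R) = cos (pi / 4).
  have := tan_piquarter R; rewrite /tan => /(congr1 (fun x => x * cos (pi / 4))).
  by rewrite mulfVK // mul1r.
split => //.
have := cos2Dsin2 (pi / 4 : R); rewrite sc => H.
have -> : (1 / 2 : R) = (cos (pi / 4) ^+ 2 + cos (pi / 4) ^+ 2) / 2 by rewrite H.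
by field.
Qed.

Lemma t_le_pi_sin (t : R) : 0 <= t <= pi / 2 -> t <= pi * sin t.
Proof.
case/andP => t0 tpi2.
have pi0 := pi_gt0 R.
have [cq sq2] := sincos_piquarter.
have cq0 : 0 < cos (pi / 4 : R).
  apply: cos_gt0_pihalf; apply/andP; split.
    by apply: lt_trans (_ : 0 < pi / 4); [rewrite oppr_lt0 divr_gt0 | rewrite divr_gt0].
  by rewrite ltr_pM2l // ltf_pV2 ?posrE // ltr_nat.
have cqh : 1 / 2 <= cos (pi / 4 : R).
  have : (1 / 2 : R) ^+ 2 <= cos (pi / 4) ^+ 2 by rewrite sq2 expr2; lra.
  move=> H; nra.
have pi2 : 2 <= pi :> R := pi_ge2 R.
have tpi : t <= pi by lra.
case: (lerP t (pi / 4)) => tq.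
  have H := sin_ge_tcos (t := t); rewrite t0 tpi /= in H.
  have ct : cos (pi / 4) <= cos t.
    rewrite leNgt ltr_cos ?in_itv /= -?leNgt ?tq ?t0 ?tpi //; apply/andP; split; lra.
  have h1 : 0 <= t * (cos t - 1 / 2) by apply: mulr_ge0 => //; lra.
  have h2 : 0 <= t * (pi - 2) by apply: mulr_ge0 => //; lra.
  have h3 : 0 <= pi * (sin t - t * cos t) by apply: mulr_ge0; lra.
  nra.
have sq : sin (pi / 4) <= sin t.
  rewrite leNgt ltr_sin ?in_itv /= -?leNgt ?(ltW tq) //; apply/andP; split; lra.
have h3 : 0 <= pi * (sin t - 1 / 2) by apply: mulr_ge0; lra.
nra.
Qed.

End Trig.

Section Geo.
Variable R : realType.

Lemma bessel d s (P : 'M[R]_(d, s)) z : P^T *m P = 1%:M -> vnorm (P^T *m z) <= vnorm z.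
Proof.
move=> Po; set a := P^T *m z.
have [a0|aN0] := eqVneq (vnorm a) 0; first by rewrite a0 vnorm_ge0.
have apos : 0 < vnorm a by rewrite lt_def aN0 vnorm_ge0.
have : vnorm a ^+ 2 <= vnorm a * vnorm z.
  rewrite vnorm_sq.
  have -> : dot a a = dot (P *m a) z by rewrite dotMl.
  by apply: le_trans (CS' _ _) _; rewrite orth_vnorm.
by rewrite expr2 ler_pM2l.
Qed.

Lemma proj_ge d s (P : 'M[R]_(d, s)) (X : 'M[R]_d) x w : onb X P ->
  (x^T <= X)%MS -> vnorm x = 1 -> dot x w <= vnorm (P^T *m w).
Proof.
case=> Po /andP [_ XP] xX x1.
have /submxP [a xa] := submx_trans xX XP.
have xE : x = P *m a^T by rewrite -[x]trmxK xa trmx_mul trmxK.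
rewrite xE dotMl; apply: le_trans (CS' _ _) _.
by rewrite -(orth_vnorm a^T Po) -xE x1 mul1r.
Qed.

Lemma proj_unit d s (P : 'M[R]_(d, s)) (X : 'M[R]_d) w : onb X P ->
  vnorm (P^T *m w) != 0 ->
  exists v, [/\ vnorm v = 1, (v^T <= X)%MS & dot v w = vnorm (P^T *m w)].
Proof.
case=> Po /andP [PX _] bN0.
set b := vnorm (P^T *m w).
exists (b^-1 *: (P *m (P^T *m w))); split.
- by rewrite vnormZ orth_vnorm // ger0_norm ?invr_ge0 ?vnorm_ge0 // mulVf.
- by rewrite linearZ /= scalemx_sub // trmx_mul (submx_trans (submxMl _ _) PX).
- rewrite dotZl dotMl -vnorm_sq -/b; field; exact: bN0.
Qed.

Lemma pert d (S : 'M[R]_d) (v : 'cV[R]_d) (eps : R) : vnorm v = 1 ->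
  vnorm ((S - 1%:M) *m v) <= eps -> eps < 1 ->
  0 < vnorm (S *m v) /\
  Num.sqrt (1 - eps ^+ 2) <= dot v (S *m v) / vnorm (S *m v).
Proof.
move=> v1 Ee e1.
set e := (S - 1%:M) *m v.
have SvE : S *m v = v + e by rewrite /e mulmxBl mul1mx addrC subrK.
have vv : dot v v = 1 by rewrite -vnorm_sq v1 expr1n.
set t := dot v e.
have ht : `|t| <= vnorm e by have := CS v e; rewrite v1 mul1r.
have e0 : 0 <= vnorm e := vnorm_ge0 e.
have Et : dot v (S *m v) = 1 + t by rewrite SvE dotDr vv.
have Es : vnorm (S *m v) ^+ 2 = 1 + 2 * t + vnorm e ^+ 2.
  by rewrite vnorm_sq SvE !(dotDl, dotDr) vv (dotC e v) -/t vnorm_sq; ring.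
have [tl tu] : - vnorm e <= t /\ t <= vnorm e.
  by move: ht; rewrite ler_norml => /andP [].
have t1 : 0 < 1 + t by lra.
have hN : 0 < vnorm (S *m v).
  have := CS' v (S *m v); rewrite v1 mul1r Et; lra.
split => //.
rewrite ler_pdivlMr //.
have t2 : t ^+ 2 <= vnorm e ^+ 2.
  by rewrite -[t ^+ 2]real_normK ?num_real // ler_pXn2r ?nnegrE.
have E2 : vnorm e ^+ 2 <= eps ^+ 2 by rewrite ler_pXn2r ?nnegrE //; lra.
have key : (1 - eps ^+ 2) * vnorm (S *m v) ^+ 2 <= (1 + t) ^+ 2.
  rewrite Es.
  have h : 0 <= (eps ^+ 2 - vnorm e ^+ 2) * (1 + 2 * t + vnorm e ^+ 2).
    by apply: mulr_ge0; [lra | rewrite -Es sqr_ge0].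
  have h2 : 0 <= (t + vnorm e ^+ 2) ^+ 2 := sqr_ge0 _.
  nra.
have ep : 0 <= 1 - eps ^+ 2 by nra.
rewrite -(ler_pXn2r (_ : (0 < 2)%N)) ?nnegrE.
- by rewrite exprMn sqr_sqrtr // Et.
- by [].
- by rewrite mulr_ge0 ?sqrtr_ge0 ?vnorm_ge0.
- rewrite Et; lra.
Qed.

Lemma sph d (x v w : 'cV[R]_d) : vnorm x = 1 -> vnorm v = 1 -> vnorm w = 1 ->
  dot x v * dot v w - Num.sqrt (1 - dot x v ^+ 2) * Num.sqrt (1 - dot v w ^+ 2)
  <= dot x w.
Proof.
move=> x1 v1 w1.
have xx : dot x x = 1 by rewrite -vnorm_sq x1 expr1n.
have vv : dot v v = 1 by rewrite -vnorm_sq v1 expr1n.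
have ww : dot w w = 1 by rewrite -vnorm_sq w1 expr1n.
set a := dot x v; set b := dot v w.
set x' := x - a *: v; set w' := w - b *: v.
have E : dot x w = a * b + dot x' w'.
  rewrite /x' /w' !(dotBl, dotBr, dotZl, dotZr) vv -/a -/b; ring.
have Nx : vnorm x' = Num.sqrt (1 - a ^+ 2).
  rewrite vnormE; congr Num.sqrt.
  rewrite /x' !(dotBl, dotBr, dotZl, dotZr) vv xx; try rewrite (dotC v x) -/a; ring.
have Nw : vnorm w' = Num.sqrt (1 - b ^+ 2).
  rewrite vnormE; congr Num.sqrt.
  rewrite /w' !(dotBl, dotBr, dotZl, dotZr) vv ww; try rewrite (dotC w v) -/b; ring.
rewrite E -Nx -Nw.
have := CS x' w'; rewrite ler_norml => /andP [h _]; lra.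
Qed.

Lemma mono_comb (a b al be : R) : 0 <= a -> a <= al -> al <= 1 ->
  0 <= b -> b <= be -> be <= 1 ->
  a * b - Num.sqrt (1 - a ^+ 2) * Num.sqrt (1 - b ^+ 2) <=
  al * be - Num.sqrt (1 - al ^+ 2) * Num.sqrt (1 - be ^+ 2).
Proof.
move=> a0 aal al1 b0 bbe be1.
have h1 : a * b <= al * be by apply: ler_pM.
have h2 : Num.sqrt (1 - al ^+ 2) <= Num.sqrt (1 - a ^+ 2).
  by rewrite ler_sqrt ?lerD2l ?lerN2 ?ler_pXn2r ?nnegrE //; nra.
have h3 : Num.sqrt (1 - be ^+ 2) <= Num.sqrt (1 - b ^+ 2).
  by rewrite ler_sqrt ?lerD2l ?lerN2 ?ler_pXn2r ?nnegrE //; nra.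
have h4 : Num.sqrt (1 - al ^+ 2) * Num.sqrt (1 - be ^+ 2) <=
          Num.sqrt (1 - a ^+ 2) * Num.sqrt (1 - b ^+ 2).
  by apply: ler_pM; rewrite ?sqrtr_ge0.
lra.
Qed.

Lemma acos_le (c z : R) : -1 <= c <= 1 -> 0 <= z <= pi -> cos z <= c -> acos c <= z.
Proof.
move=> c1 z0 H; rewrite leNgt; apply/negP => Hlt.
have : cos (acos c) < cos z.
  by rewrite ltr_cos // in_itv /= ?acos_ge0 ?acos_lepi.
by rewrite acosK ?in_itv //; lra.
Qed.

Lemma dir d s1 s2 (P1 : 'M[R]_(d, s1)) (P2 : 'M[R]_(d, s2)) (X1 X2 : 'M[R]_d)
    (w : 'cV[R]_d) (c1 ca : R) :
  onb X1 P1 -> onb X2 P2 -> vnorm w = 1 -> 0 <= c1 -> c1 <= vnorm (P1^T *m w) ->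
  0 <= ca ->
  (forall v, vnorm v = 1 -> (v^T <= X1)%MS ->
     exists x, [/\ vnorm x = 1, (x^T <= X2)%MS & ca <= dot v x]) ->
  ca * c1 - Num.sqrt (1 - ca ^+ 2) * Num.sqrt (1 - c1 ^+ 2) <= vnorm (P2^T *m w).
Proof.
move=> O1 O2 w1 c10 hc1 ca0 tr.
have [b0|bN0] := eqVneq (vnorm (P1^T *m w)) 0.
  have -> : c1 = 0 by apply/eqP; rewrite eq_le c10 andbT -b0.
  apply: le_trans (vnorm_ge0 _); rewrite mulr0 expr0n /= subr0 sqrtr1 mulr1 sub0r.
  by rewrite oppr_le0 sqrtr_ge0.
have [v [v1 vX vw]] := proj_unit O1 bN0.
have [x [x1 xX vx]] := tr v v1 vX.
apply: le_trans _ (proj_ge w O2 xX x1).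
apply: le_trans _ (sph x1 v1 w1).
have be1 : dot v w <= 1.
  by rewrite vw; apply: le_trans (bessel _ O1.1) _; rewrite w1.
have al1 : dot x v <= 1 by have := CS' x v; rewrite x1 v1 mul1r.
apply: mono_comb => //; first by rewrite dotC.
by rewrite vw.
Qed.

End Geo.

Section Main.
Variable R : realType.

Lemma contr d s (P Q : 'M[R]_(d, s)) (X W : 'M[R]_d) : onb X P -> onb W Q ->
  forall y, vnorm (P^T *m Q *m y) <= vnorm y.
Proof.
move=> [Po _] [Qo _] y; rewrite -mulmxA; apply: le_trans (bessel _ Po) _.
by rewrite orth_vnorm.
Qed.

Lemma acos_in (c : R) : 0 <= c <= 1 -> 0 <= acos c <= pi / 2.
Proof.
move=> /andP [c0 c1].
have pi0 := pi_gt0 R.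
rewrite acos_ge0 /=; last by apply/andP; split => //; lra.
apply: acos_le; first (apply/andP; split => //; lra).
  by apply/andP; split; lra.
by rewrite cos_pihalf.
Qed.

Lemma one_dir d s (PA PB Q : 'M[R]_(d, s)) (XA XB W : 'M[R]_d) (eps : R) :
  (0 < s)%N -> onb XA PA -> onb XB PB -> onb W Q -> 0 <= eps -> eps < 1 ->
  (forall v, vnorm v = 1 -> (v^T <= XA)%MS ->
     exists x, [/\ vnorm x = 1, (x^T <= XB)%MS & Num.sqrt (1 - eps ^+ 2) <= dot v x]) ->
  acos (sing_min (PB^T *m Q)) <= acos (Num.sqrt (1 - eps ^+ 2)) + acos (sing_min (PA^T *m Q)).
Proof.
move=> s0 OA OB OQ e0 e1 tr.
have pi0 := pi_gt0 R.
have [cA0 cA1 FA _] := sing_min_props s0 (contr OA OQ).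
have [cB0 cB1 _ [y [y1 FB]]] := sing_min_props s0 (contr OB OQ).
set cA := sing_min _ in cA0 cA1 FA *.
set cB := sing_min _ in cB0 cB1 FB *.
set ca := Num.sqrt (1 - eps ^+ 2).
have ep : 0 <= 1 - eps ^+ 2 by nra.
have ca0 : 0 <= ca := sqrtr_ge0 _.
have ca1 : ca <= 1 by rewrite /ca -[X in _ <= X]sqrtr1 ler_sqrt //; nra.
have sa : Num.sqrt (1 - ca ^+ 2) = eps.
  by rewrite /ca sqr_sqrtr // opprB addrC subrK sqrtr_sqr ger0_norm.
have w1 : vnorm (Q *m y) = 1 by rewrite orth_vnorm // OQ.1.
have hA : cA <= vnorm (PA^T *m (Q *m y)).
  by have := FA y; rewrite y1 mulr1 mulmxA.
have := dir OA OB w1 cA0 hA ca0 tr; rewrite sa => H.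
have hB : ca * cA - eps * Num.sqrt (1 - cA ^+ 2) <= cB.
  by apply: le_trans H _; rewrite mulmxA.
have /andP [dl0 dl2] : 0 <= acos ca <= pi / 2 by apply: acos_in; rewrite ca0 ca1.
have /andP [tA0 tA2] : 0 <= acos cA <= pi / 2 by apply: acos_in; rewrite cA0 cA1.
apply: acos_le.
- by apply/andP; split => //; lra.
- by apply/andP; split; lra.
rewrite cosD !acosK ?in_itv /= ?ca1 ?cA1 ?(le_trans _ ca0) ?(le_trans _ cA0) ?lerN10 //.
rewrite sin_acos ?sin_acos ?sa //; apply/andP; split => //; lra.
Qed.

End Main.

Lemma tr12 (R : realType) d (V S : 'M[R]_d) eps :
  (forall v, vnorm v = 1 -> vnorm ((S - 1%:M) *m v) <= eps) -> eps < 1 ->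
  forall v, vnorm v = 1 -> (v^T <= V)%MS ->
  exists x, [/\ vnorm x = 1, (x^T <= img_sub S V)%MS &
                Num.sqrt (1 - eps ^+ 2) <= dot v x].
Proof.
move=> Hs e1 v v1 vV.
have [Sv0 H] := pert v1 (Hs v v1) e1.
exists ((vnorm (S *m v))^-1 *: (S *m v)); split.
- by rewrite vnormZ ger0_norm ?invr_ge0 ?vnorm_ge0 // mulVf // gt_eqF.
- by rewrite linearZ /= scalemx_sub // trmx_mul /img_sub submxMr.
- by rewrite dotZr mulrC.
Qed.

Lemma tr21 (R : realType) d (V S : 'M[R]_d) eps :
  (forall v, vnorm v = 1 -> vnorm ((S - 1%:M) *m v) <= eps) -> eps < 1 ->
  forall x, vnorm x = 1 -> (x^T <= img_sub S V)%MS ->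
  exists v, [/\ vnorm v = 1, (v^T <= V)%MS &
                Num.sqrt (1 - eps ^+ 2) <= dot x v].
Proof.
move=> Hs e1 x x1 /submxP [D xE].
set u := (D *m V)^T.
have xu : x = S *m u by rewrite -[x]trmxK xE mulmxA trmx_mul trmxK.
have uN0 : vnorm u != 0.
  rewrite vnorm_eq0; apply/negP => /eqP u0.
  move: x1; rewrite xu u0 mulmx0 => h.
  by have := vnorm_eq0 (0 : 'cV[R]_d); rewrite h eqxx oner_eq0.
have up : 0 < vnorm u by rewrite lt_def uN0 vnorm_ge0.
set v := (vnorm u)^-1 *: u.
have v1 : vnorm v = 1 by rewrite vnormZ ger0_norm ?invr_ge0 ?vnorm_ge0 // mulVf.
have [Sv0 H] := pert v1 (Hs v v1) e1.
exists v; split => //.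
  by rewrite /v linearZ /= scalemx_sub // /u trmxK submxMl.
have Sv : S *m v = (vnorm u)^-1 *: x by rewrite /v -scalemxAr -xu.
move: H; rewrite Sv vnormZ x1 mulr1 ger0_norm ?invr_ge0 ?vnorm_ge0 //.
by rewrite dotZr mulrC mulrA mulVf ?invr_eq0 // mul1r dotC.
Qed.

Unset Implicit Arguments.

Theorem lemma3p3 (R : realType) (s d : nat) (V W S : 'M[R]_d) :
  (0 < s)%N ->
  in_Grass s V -> in_Grass s W -> in_Grass s (img_sub S V) ->
  `| max_angle s (img_sub S V) W - max_angle s V W |
    <= (pi / 2 + Num.sqrt (pi ^+ 2 / 4 + 1)) * spec_norm (S - 1%:M).
Proof.
move=> s0 rV rW rSV.
have pi0 := pi_gt0 R.
set eps := spec_norm (S - 1%:M).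
set C := pi / 2 + _.
have Cpi : pi <= C.
  rewrite /C {1}[pi]splitr lerD2l.
  have h : (pi : R) ^+ 2 / 4 = (pi / 2) ^+ 2 by field.
  apply: (@le_trans _ _ (Num.sqrt ((pi : R) ^+ 2 / 4))).
    by rewrite h sqrtr_sqr ger0_norm //; lra.
  rewrite ler_sqrt ?lerDl //; rewrite h; exact: addr_ge0 (sqr_ge0 _) ler01.
have Hs v : vnorm v = 1 -> vnorm ((S - 1%:M) *m v) <= eps := fun h => spec_norm_ub _ h.
rewrite /max_angle /=.
set P2 := xget 0 [set P : 'M[R]_(d, s) | onb (img_sub S V) P].
set P1 := xget 0 [set P : 'M[R]_(d, s) | onb V P].
set Q := xget 0 [set P : 'M[R]_(d, s) | onb W P].
have O2 : onb (img_sub S V) P2 by apply: xgetPex; exact: onb_exists.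
have O1 : onb V P1 by apply: xgetPex; exact: onb_exists.
have OQ : onb W Q by apply: xgetPex; exact: onb_exists.
have [c10 c11 _ _] := sing_min_props s0 (contr O1 OQ).
have [c20 c21 _ [y [y1 _]]] := sing_min_props s0 (contr O2 OQ).
have /andP [t10 t12] : 0 <= acos (sing_min (P1^T *m Q)) <= pi / 2 by apply: acos_in; apply/andP.
have /andP [t20 t22] : 0 <= acos (sing_min (P2^T *m Q)) <= pi / 2 by apply: acos_in; apply/andP.
have e0 : 0 <= eps.
  have w1 : vnorm (Q *m y) = 1 by rewrite orth_vnorm // OQ.1.
  by apply: le_trans (Hs _ w1); exact: vnorm_ge0.
have [e1|e1] := ltP eps 1; last first.
  rewrite ler_distl; apply/andP; split; nra.
have d0 : 0 <= acos (Num.sqrt (1 - eps ^+ 2)) <= pi / 2.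
  by apply: acos_in; rewrite sqrtr_ge0 /= -[X in _ <= X]sqrtr1 ler_sqrt //; nra.
have dle : acos (Num.sqrt (1 - eps ^+ 2)) <= pi * eps.
  have := t_le_pi_sin d0; rewrite sin_acos ?sqr_sqrtr; last 2 first.
  - nra.
  - by apply/andP; split; [apply: le_trans (sqrtr_ge0 _); lra | rewrite -[X in _ <= X]sqrtr1 ler_sqrt //; nra].
  have -> : 1 - (1 - eps ^+ 2) = eps ^+ 2 by ring.
  by rewrite sqrtr_sqr ger0_norm.
have A := one_dir s0 O1 O2 OQ e0 e1 (@tr12 R d V S eps Hs e1).
have B := one_dir s0 O2 O1 OQ e0 e1 (@tr21 R d V S eps Hs e1).
have piC : pi * eps <= C * eps by apply: ler_wpM2r.
rewrite ler_distl; apply/andP; split; lra.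
Qed.
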